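(* Let $\Bbbk$ be a field of characteristic zero and $n \ge 1$. Let $\mathrm{Se}_n$ be the Sergeev algebra and $e_{(n)}, e_{(1^n)} \in \mathrm{Se}_n$ as in the context. Then there is an isomorphism of $\mathbb{Z}/2\mathbb{Z}$-graded left $\mathrm{Se}_n$-modules $\mathrm{Se}_n e_{(n)} \cong \mathrm{Se}_n e_{(1^n)}\{n\}$.
   Context: $\mathrm{Cliff}_n$ is the $\Bbbk$-algebra with generators $c_1,\dots,c_n$ and relations $c_i^2=-1$ and $c_ic_j=-c_jc_i$ for $i\neq j$. The Sergeev algebra is $\mathrm{Se}_n = \mathrm{Cliff}_n \rtimes \Bbbk[S_n]$, where $S_n$ acts on $\mathrm{Cliff}_n$ by permuting the generators ($w c_i w^{-1} = c_{w(i)}$). It is $\mathbb{Z}/2\mathbb{Z}$-graded with $c_i$ odd and the simple transpositions $s_1,\dots,s_{n-1}$ even. $e_{(n)} = \frac{1}{n!}\sum_{w \in S_n} w$ and $e_{(1^n)} = \frac{1}{n!}\sum_{w\in S_n} (-1)^{\ell(w)} w$, where $\ell$ is the length function. For a graded module $M$, $M\{k\}$ denotes $M$ with its $\mathbb{Z}/2\mathbb{Z}$-grading shifted by $k \bmod 2$. *)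

(* Defs.v *)
(* Concrete model of the Sergeev algebra Se_n = Cliff_n x| k[S_n]. *)
From HB Require Import structures.
From mathcomp Require Import all_boot all_order all_fingroup all_algebra.
Set Implicit Arguments. Unset Strict Implicit. Unset Printing Implicit Defensive.
Import GRing.Theory.
Local Open Scope ring_scope.

Section Sergeev.
Variables (k : fieldType) (n : nat).

(* Cliff_n in its monomial basis: c_A := c_{a_1} c_{a_2} ... c_{a_m} for
   A = {a_1 < ... < a_m}; an element is its coefficient function. *)
Definition Cl := {ffun {set 'I_n} -> k^o}.

Definition clmono (A : {set 'I_n}) : Cl := [ffun B => (B == A)%:R].

(* c_A * c_j, using c_i c_j = - c_j c_i (i <> j) and c_j^2 = -1 *)
Definition clmono_gen (A : {set 'I_n}) (j : 'I_n) : Cl :=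
  (-1) ^+ #|[set a in A | (j < a)%N]| *:
    (if j \in A then - clmono (A :\ j) else clmono (j |: A)).

Definition clmulgen (x : Cl) (j : 'I_n) : Cl :=
  \sum_(A : {set 'I_n}) x A *: clmono_gen A j.

Definition clword (x : Cl) (s : seq 'I_n) : Cl := foldl clmulgen x s.

(* product in Cliff_n (enum B lists B in increasing order) *)
Definition clmul (x y : Cl) : Cl :=
  \sum_(B : {set 'I_n}) y B *: clword x (enum B).

(* w y w^{-1}: the S_n-action c_i |-> c_{w(i)} *)
Definition clconj (w : 'S_n) (y : Cl) : Cl :=
  \sum_(B : {set 'I_n}) y B *: clword (clmono set0) [seq w b | b <- enum B].

(* Se_n with basis c_A w, (A, w) in {set 'I_n} * 'S_n *)
Definition Se := {ffun {set 'I_n} * 'S_n -> k^o}.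

(* the element z * u, z in Cliff_n, u in S_n *)
Definition sebasis (z : Cl) (u : 'S_n) : Se :=
  [ffun r => if r.2 == u then z r.1 else 0].

(* group product in S_n as composition of functions: (w o v)(i) = w (v i);
   in mathcomp, (v * w)%g i = w (v i). *)
Definition scomp (w v : 'S_n) : 'S_n := (v * w)%g.

(* (c_A w)(c_B v) = c_A (w c_B w^{-1}) (w o v), extended bilinearly *)
Definition semul (x y : Se) : Se :=
  \sum_(p : {set 'I_n} * 'S_n) \sum_(q : {set 'I_n} * 'S_n)
     (x p * y q) *: sebasis (clmul (clmono p.1) (clconj p.2 (clmono q.1)))
                            (scomp p.2 q.2).

(* e_(n) and e_(1^n); (-1)^{l(w)} = (-1)^{odd_perm w} *)
Definition e_triv : Se :=
  (n`!%:R)^-1 *: \sum_(w : 'S_n) sebasis (clmono set0) w.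
Definition e_sgn : Se :=
  (n`!%:R)^-1 *: \sum_(w : 'S_n) ((-1) ^+ odd_perm w) *: sebasis (clmono set0) w.

Definition left_ideal (e : Se) (x : Se) : Prop := exists y, x = semul y e.

Definition homog (p : bool) (x : Se) : Prop :=
  forall r : {set 'I_n} * 'S_n, x r != 0 -> odd #|r.1| = p.

End Sergeev.

(* Main.v *)
Require Import Defs.
From mathcomp Require Import all_boot all_order all_fingroup all_algebra zify.
Set Implicit Arguments. Unset Strict Implicit. Unset Printing Implicit Defensive.
Import GRing.Theory.
Local Open Scope ring_scope.

Section Work.
Variables (k : fieldType) (n : nat).

Definition sg (e : nat) : k := (-1) ^+ e.
Definition cg (C : {set 'I_n}) (j : 'I_n) := #|[set a in C | (j < a)%N]|.
Definition tog (C : {set 'I_n}) j := if j \in C then C :\ j else j |: C.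
Definition step (p : nat * {set 'I_n}) j :=
  ((p.1 + cg p.2 j + (j \in p.2))%N, tog p.2 j).

Lemma sgD a b : sg (a + b) = sg a * sg b.
Proof. by rewrite /sg exprD. Qed.

Lemma clmono_coef C A : (clmono k C : Cl k n) A = (A == C)%:R.
Proof. by rewrite /clmono ffunE. Qed.

Lemma clmulgen_mono e C j :
  clmulgen (sg e *: clmono k C) j = sg (e + cg C j + (j \in C))%N *: clmono k (tog C j).
Proof.
rewrite /clmulgen (bigD1 C) //= big1 => [|A /negbTE AC]; last first.
  by rewrite ffunE clmono_coef AC scaler0 scale0r.
rewrite ffunE clmono_coef eqxx /clmono_gen /tog /cg addr0.
have -> : (sg e *: true%:R : k^o) = sg e by rewrite [LHS]mulr1.
case: (j \in C); rewrite !sgD scalerA.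
  by rewrite /sg expr1 mulrN1 scalerN scaleNr.
by rewrite /sg expr0 mulr1.
Qed.

Lemma clword_mono e C s :
  clword (sg e *: clmono k C) s =
  sg (foldl step (e, C) s).1 *: clmono k (foldl step (e, C) s).2.
Proof.
elim: s e C => [|j s IH] e C //=.
by rewrite /clword /= clmulgen_mono -IH.
Qed.


Definition ltI (a b : 'I_n) := (a < b)%N.
Definition sd (A B : {set 'I_n}) := (A :\: B) :|: (B :\: A).
Definition E (A B : {set 'I_n}) := (\sum_(b in B) (cg A b + (b \in A)))%N.
Definition I (w : 'S_n) (B : {set 'I_n}) :=
  (\sum_(a in B) \sum_(b in B) ((a < b)%N && (w b < w a)%N))%N.

Lemma sorted_rcons_all (s : seq 'I_n) m :
  sorted ltI (rcons s m) -> sorted ltI s /\ all (fun y => ltI y m) s.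
Proof.
move=> H; split.
  by move: H; rewrite -cats1 => /cat_sorted2 [].
have tr : transitive (fun x y : 'I_n => ltI y x).
  by move=> x y z; rewrite /ltI => h1 h2; apply: ltn_trans h2 h1.
move: H; rewrite -rev_sorted rev_rcons /= => /(order_path_min tr).
by rewrite all_rev.
Qed.

Lemma set_rcons (s : seq 'I_n) m : [set x in rcons s m] = m |: [set x in s].
Proof. by apply/setP => x; rewrite !inE mem_rcons in_cons. Qed.

Lemma foldl_sortedA e A (s : seq 'I_n) : sorted ltI s ->
  foldl step (e, A) s = ((e + E A [set x in s])%N, sd A [set x in s]).
Proof.
elim/last_ind: s => [|s m IH].
  move=> _ /=; rewrite /E big_pred0 ?addn0; last by move=> x; rewrite inE.
  by congr (_, _); apply/setP => x; rewrite !inE /= in_nil andbF orbF.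
move=> /sorted_rcons_all [/IH {}IH /allP lt_m].
rewrite foldl_rcons IH set_rcons /step /=.
have mS : m \notin s.
  by apply/negP => /lt_m; rewrite /ltI ltnn.
have sdm : (m \in sd A [set x in s]) = (m \in A).
  by rewrite !inE (negbTE mS) /= ?andbT ?orbF; case: (m \in A).
congr (_, _).
  have cgeq : cg (sd A [set x in s]) m = cg A m.
    rewrite /cg; apply: eq_card => a; rewrite !inE.
    case: ltnP => ma; rewrite ?andbF //=.
    have nas : (a \in s) = false by apply/negP => /lt_m; rewrite /ltI ltnNge ltnW.
    by rewrite nas; case: (a \in A).
  rewrite /E big_setU1 /=; last by rewrite inE.
  rewrite sdm cgeq; lia.
rewrite /tog sdm; apply/setP => x.
case: (boolP (m \in A)) => mA; rewrite !inE;
  case: (boolP (x == m)) => [/eqP ->|xm]; rewrite ?mA ?(negbTE mS) ?xm //=.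
Qed.


Lemma mem_imset_perm (w : 'S_n) (S : {set 'I_n}) x : (x \in w @: S) = ((w^-1)%g x \in S).
Proof.
apply/imsetP/idP => [[y yS ->]|h]; first by rewrite permK.
by exists ((w^-1)%g x) => //; rewrite permKV.
Qed.

Lemma card_sum (P : pred 'I_n) : #|[set x | P x]| = (\sum_x P x)%N.
Proof.
rewrite -sum1_card big_mkcond /=; apply: eq_bigr => x _; rewrite inE.
by case: (P x).
Qed.

Lemma sum_in (S : {set 'I_n}) (P : pred 'I_n) :
  (\sum_(a in S) P a = \sum_a ((a \in S) && P a))%N.
Proof. by rewrite big_mkcond /=; apply: eq_bigr => a _; case: (a \in S). Qed.

Lemma I_U1 (w : 'S_n) (S : {set 'I_n}) (m : 'I_n) : (forall a, a \in S -> a < m)%N ->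
  I w (m |: S) = (I w S + \sum_(a in S) (w m < w a))%N.
Proof.
move=> ltm; have mS : m \notin S by apply/negP => /ltm; rewrite ltnn.
rewrite /I big_setU1 //= big1 ?add0n; last first.
  move=> b; rewrite !inE => /orP [/eqP ->|/ltm h]; first by rewrite ltnn.
  by rewrite ltnNge ltnW.
rewrite addnC -big_split /=; apply: eq_bigr => a aS.
by rewrite big_setU1 //= ltm // addnC.
Qed.

Lemma foldl_sortedW e (w : 'S_n) (s : seq 'I_n) : sorted ltI s ->
  foldl step (e, set0) (map w s) = ((e + I w [set x in s])%N, w @: [set x in s]).
Proof.
elim/last_ind: s => [|s m IH].
  move=> _ /=; rewrite /I big_pred0 ?addn0 //; last by move=> x; rewrite inE.
  by congr (_, _); apply/setP => x; rewrite mem_imset_perm !inE in_nil.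
move=> /sorted_rcons_all [/IH {}IH /allP lt_m].
rewrite map_rcons foldl_rcons IH set_rcons /step /=.
have ltm : forall a, a \in [set x in s] -> (a < m)%N by move=> a; rewrite inE => /lt_m.
have mS : (w m \in w @: [set x in s]) = false.
  by rewrite mem_imset_perm permK inE; apply/negP => /lt_m; rewrite /ltI ltnn.
rewrite mS /tog mS imsetU1 I_U1 // addn0 addnA; congr ((_ + _ + _)%N, _).
rewrite /cg card_sum sum_in (reindex_inj (@perm_inj _ w)) /=.
by apply: eq_bigr => a _; rewrite mem_imset_perm permK.
Qed.


Lemma sorted_enum (B : {set 'I_n}) : sorted ltI (enum B).
Proof.
have h : sorted ltI (enum 'I_n).
  by have := iota_ltn_sorted 0 n; rewrite -val_enum_ord sorted_map.
rewrite /enum_mem; apply: sorted_filter; first by move=> x y z; apply: ltn_trans.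
by move: h; rewrite enumT.
Qed.

Definition dl (r : {set 'I_n} * 'S_n) : Se k n := [ffun r' => (r' == r)%:R].

Lemma sebasis_mono c D u : sebasis (c *: clmono k D) u = c *: dl (D, u).
Proof.
apply/ffunP => r; rewrite !ffunE /=; case: r => [D' u'] /=.
rewrite xpair_eqE; case: (u' == u); rewrite ?andbT ?andbF //.
by rewrite scaler0.
Qed.

Lemma clmono1 (D : {set 'I_n}) : clmono k D = sg 0 *: clmono k D.
Proof. by rewrite /sg expr0 scale1r. Qed.

Lemma clconj_mono (w : 'S_n) B :
  clconj w (clmono k B) = sg (I w B) *: clmono k (w @: B).
Proof.
rewrite /clconj (bigD1 B) //= big1 => [|B' /negbTE BB]; last first.
  by rewrite clmono_coef BB scale0r.
rewrite clmono_coef eqxx scale1r addr0 clmono1 clword_mono foldl_sortedW ?sorted_enum //=.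
by rewrite set_enum.
Qed.

Lemma clmul_mono A c B :
  clmul (clmono k A) (c *: clmono k B) = (c * sg (E A B)) *: clmono k (sd A B).
Proof.
rewrite /clmul (bigD1 B) //= big1 => [|B' /negbTE BB]; last first.
  by rewrite ffunE clmono_coef BB scaler0 scale0r.
rewrite ffunE clmono_coef eqxx addr0 clmono1 clword_mono foldl_sortedA ?sorted_enum //=.
by rewrite set_enum scalerA add0n; congr (_ *: _); rewrite [X in X * _]mulr1.
Qed.

Definition bp (p q : {set 'I_n} * 'S_n) : Se k n :=
  sebasis (clmul (clmono k p.1) (clconj p.2 (clmono k q.1))) (scomp p.2 q.2).

Lemma bpE A w B v :
  bp (A, w) (B, v) = sg (I w B + E A (w @: B)) *: dl (sd A (w @: B), scomp w v).
Proof. by rewrite /bp /= clconj_mono clmul_mono sebasis_mono sgD. Qed.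

Lemma semulE x y : semul x y = \sum_p \sum_q (x p * y q) *: bp p q.
Proof. by []. Qed.


Notation idx := ({set 'I_n} * 'S_n)%type.
Implicit Types (x y z : Se k n) (p q r : idx) (c : k).

Lemma coefD (x y : Se k n) r : (x + y) r = x r + y r.
Proof. by rewrite ffunE. Qed.
Lemma coefZ c (x : Se k n) r : (c *: x) r = c * x r.
Proof. by rewrite ffunE. Qed.
Lemma coef0 r : (0 : Se k n) r = 0.
Proof. by rewrite ffunE. Qed.

Lemma sum_dl (F : idx -> Se k n) r0 : \sum_r ((r == r0)%:R : k) *: F r = F r0.
Proof.
rewrite (bigD1 r0) //= big1 => [|r /negbTE ->]; last by rewrite scale0r.
by rewrite eqxx scale1r addr0.
Qed.

Lemma semulDl (x1 x2 : Se k n) y : semul (x1 + x2) y = semul x1 y + semul x2 y.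
Proof.
rewrite !semulE -big_split /=; apply: eq_bigr => p _.
rewrite -big_split /=; apply: eq_bigr => q _.
by rewrite coefD mulrDl scalerDl.
Qed.

Lemma semulZl c x y : semul (c *: x) y = c *: semul x y.
Proof.
rewrite !semulE scaler_sumr; apply: eq_bigr => p _.
rewrite scaler_sumr; apply: eq_bigr => q _.
by rewrite coefZ scalerA mulrA.
Qed.

Lemma semulDr x (y1 y2 : Se k n) : semul x (y1 + y2) = semul x y1 + semul x y2.
Proof.
rewrite !semulE -big_split /=; apply: eq_bigr => p _.
rewrite -big_split /=; apply: eq_bigr => q _.
by rewrite coefD mulrDr scalerDl.
Qed.

Lemma semulZr c x y : semul x (c *: y) = c *: semul x y.
Proof.
rewrite !semulE scaler_sumr; apply: eq_bigr => p _.
rewrite scaler_sumr; apply: eq_bigr => q _.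
by rewrite coefZ scalerA mulrCA.
Qed.

Lemma semul0r x : semul x 0 = 0.
Proof.
rewrite semulE big1 // => p _; rewrite big1 // => q _.
by rewrite coef0 mulr0 scale0r.
Qed.

Lemma semul_sumr (J : finType) x (F : J -> Se k n) :
  semul x (\sum_j F j) = \sum_j semul x (F j).
Proof.
elim/big_rec2: _ => [|r y1 y2 _ <-]; first by rewrite semul0r.
by rewrite semulDr.
Qed.

Lemma dl_decomp (x : Se k n) : x = \sum_r x r *: dl r.
Proof.
apply/ffunP => r; rewrite sum_ffunE.
rewrite (bigD1 r) //= big1 => [|r' rr']; last by rewrite coefZ ffunE eq_sym (negbTE rr') mulr0.
by rewrite coefZ ffunE eqxx mulr1 addr0.
Qed.

Lemma semul_dlr x q : semul x (dl q) = \sum_p x p *: bp p q.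
Proof.
rewrite semulE; apply: eq_bigr => p _.
under eq_bigr => q' _ do rewrite ffunE -scalerA.
by rewrite -scaler_sumr sum_dl.
Qed.

Lemma semul_dll p y : semul (dl p) y = \sum_q y q *: bp p q.
Proof.
rewrite semulE.
under eq_bigr => p' _ do under eq_bigr => q _ do rewrite ffunE -scalerA.
under eq_bigr => p' _ do rewrite -scaler_sumr.
by rewrite sum_dl.
Qed.

Lemma semul_dl p q : semul (dl p) (dl q) = bp p q.
Proof.
rewrite semul_dll.
under eq_bigr => q' _ do rewrite ffunE.
by rewrite sum_dl.
Qed.


Notation xs F := (\big[addb/false]_(i : 'I_n) F i).

Definition inv (u : 'S_n) (a b : 'I_n) := (a < b)%N (+) (u a < u b)%N.
Definition It (u : 'S_n) := (\sum_(a : 'I_n) \sum_(b : 'I_n) ((a < b)%N && inv u a b))%N.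

Lemma odd_sum (F : 'I_n -> nat) : odd (\sum_i F i) = \big[addb/false]_i odd (F i).
Proof. by apply: (big_morph odd oddD). Qed.

Lemma inv_diag u a : inv u a a = false.
Proof. by rewrite /inv !ltnn. Qed.

Lemma inv_sym u a b : inv u a b = inv u b a.
Proof.
rewrite /inv; case: (ltngtP a b) => [ab|ba|/val_inj ->] //=.
  have : u a != u b by rewrite (inj_eq perm_inj) neq_ltn ab.
  by rewrite neq_ltn; case: ltngtP.
have : u b != u a by rewrite (inj_eq perm_inj) neq_ltn ba.
by rewrite neq_ltn; case: ltngtP.
Qed.

Lemma I_T w : I w setT = It w.
Proof.
rewrite /I /It; apply: eq_big => [a|a _]; first by rewrite inE.
apply: eq_big => [b|b _]; first by rewrite inE.
rewrite /inv; case: ltngtP => //= ab.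
have : w a != w b by rewrite (inj_eq perm_inj) neq_ltn ab.
by rewrite neq_ltn; case: ltngtP.
Qed.

Lemma oddIt u : odd (It u) = xs (fun a : 'I_n => xs (fun b : 'I_n => (a < b)%N && inv u a b)).
Proof.
rewrite /It odd_sum; apply: eq_bigr => a _; rewrite odd_sum.
by apply: eq_bigr => b _; rewrite oddb.
Qed.

Lemma half_sym (g : 'I_n -> 'I_n -> bool) :
  (forall a b, g a b = g b a) -> (forall a, g a a = false) ->
  ((\sum_(a : 'I_n) \sum_(b : 'I_n) ((a < b)%N && g a b)).*2 = \sum_(a : 'I_n) \sum_(b : 'I_n) g a b)%N.
Proof.
move=> gs gd.
have -> : (\sum_(a : 'I_n) \sum_(b : 'I_n) g a b = \sum_(a : 'I_n) \sum_(b : 'I_n) ((a < b)%N && g a b)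
            + \sum_(a : 'I_n) \sum_(b : 'I_n) ((b < a)%N && g a b))%N.
  rewrite -big_split; apply: eq_bigr => a _; rewrite -big_split; apply: eq_bigr => b _.
  case: (ltngtP a b) => [|| /val_inj ->] //=; by rewrite ?gd ?addn0.
rewrite -addnn; congr (_ + _)%N; rewrite exchange_big /=.
by apply: eq_bigr => a _; apply: eq_bigr => b _; rewrite gs.
Qed.

Lemma It_comp (u v : 'S_n) : odd (It (u * v)%g) = odd (It u) (+) odd (It v).
Proof.
have e1 : forall a b, inv (u * v)%g a b = inv u a b (+) inv v (u a) (u b).
  move=> a b; rewrite /inv !permM.
  by case: (a < b)%N; case: (u a < u b)%N; case: (v (u a) < v (u b))%N.
have e2 : (\sum_(a : 'I_n) \sum_(b : 'I_n) ((a < b)%N && inv v (u a) (u b)) = It v)%N.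
  rewrite -[LHS]doubleK -[RHS]doubleK; congr (_./2).
  rewrite half_sym; last by move=> a; rewrite inv_diag.
    rewrite /It half_sym; last by move=> a; rewrite inv_diag.
      rewrite [RHS](reindex_inj (@perm_inj _ u)) /=; apply: eq_bigr => a _.
      by rewrite [RHS](reindex_inj (@perm_inj _ u)).
    by move=> a b; rewrite inv_sym.
  by move=> a b; rewrite inv_sym.
rewrite -e2 !oddIt odd_sum -big_split /=; apply: eq_bigr => a _.
rewrite odd_sum -big_split /=; apply: eq_bigr => b _.
by rewrite e1 andb_addr oddb.
Qed.


Lemma It1 : It 1 = 0%N.
Proof. by rewrite /It big1 // => a _; rewrite big1 // => b _; rewrite /inv !perm1 addbb andbF. Qed.

Lemma It_conj (t s : 'S_n) : odd (It (t ^ s)%g) = odd (It t).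
Proof.
have h := It_comp s s^-1; rewrite mulgV It1 /= in h.
rewrite conjgE !It_comp; move: h.
by case: (odd (It s)); case: (odd (It s^-1)); case: (odd (It t)).
Qed.

Lemma tperm_adj_pt (a b c d : 'I_n) : val b = (val a).+1 ->
  ((c < d)%N && inv (tperm a b) c d) = (c == a) && (d == b).
Proof.
move=> hb; rewrite /inv.
case: tpermP => [->|->|cx cy]; case: tpermP => [->|->|dx dy];
  repeat match goal with H : _ <> _ |- _ => move/eqP: H end; move: hb;
  rewrite -?val_eqE;
  repeat match goal with o : 'I_n |- _ => case: o => [? ?] end; simpl; lia.
Qed.

Lemma It_adj (a b : 'I_n) : val b = (val a).+1 -> odd (It (tperm a b)).
Proof.
move=> hb; rewrite oddIt.
under eq_bigr => c _ do under eq_bigr => d _ do rewrite tperm_adj_pt //.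
rewrite (bigD1 a) //= [X in _ (+) X]big1 => [|c /negbTE ->]; last by rewrite big1.
rewrite addbF eqxx /= (bigD1 b) // big1 => [|d /andP [_ /negbTE ->]] //.
by rewrite eqxx.
Qed.

Lemma It_tperm (x y : 'I_n) : odd (It (tperm x y)) = (x != y).
Proof.
case: (eqVneq x y) => [->|xy]; first by rewrite tperm1 It1.
wlog lt_xy : x y xy / (x < y)%N.
  move=> H; case: (ltngtP x y) => [h|h|/val_inj e]; first exact: H.
    by rewrite tpermC H // eq_sym.
  by rewrite e eqxx in xy.
have lt1 : (x.+1 < n)%N by apply: leq_ltn_trans (ltn_ord y).
pose b := Ordinal lt1.
case: (eqVneq b y) => [<-|bxy]; first by apply: It_adj.
have bx : b != x by rewrite -val_eqE /= neq_ltn ltnSn orbT.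
have e : tperm x y = (tperm b x ^ tperm b y)%g.
  rewrite (tpermJ_tperm bx); first exact: tpermC.
  by rewrite eq_sym.
by rewrite e It_conj tpermC; apply: It_adj.
Qed.

Lemma It_odd (u : 'S_n) : odd (It u) = odd_perm u.
Proof.
case: (prod_tpermP u) => ts -> {u}; elim: ts => [|t ts IH].
  by rewrite big_nil It1 odd_perm1.
rewrite [all _ _]/= => /andP [tt /IH {}IH]; rewrite big_cons It_comp IH It_tperm.
by rewrite odd_mul_tperm.
Qed.


Lemma andb_xs (c : bool) (F : 'I_n -> bool) : c && xs F = xs (fun i => c && F i).
Proof. by case: c => //=; rewrite big1. Qed.

Lemma Xsplit (f : 'I_n -> 'I_n -> bool) :
  xs (fun a => xs (fun b => f a b)) =
  xs (fun a : 'I_n => xs (fun b : 'I_n => (a < b)%N && (f a b (+) f b a))) (+) xs (fun a => f a a).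
Proof.
have -> : xs (fun a => xs (fun b => f a b)) =
   xs (fun a : 'I_n => xs (fun b : 'I_n => (a < b)%N && f a b))
   (+) xs (fun a : 'I_n => xs (fun b : 'I_n => (b < a)%N && f a b))
   (+) xs (fun a : 'I_n => xs (fun b : 'I_n => (a == b) && f a b)).
  rewrite -!big_split /=; apply: eq_bigr => a _; rewrite -!big_split /=.
  apply: eq_bigr => b _; case: (ltngtP a b) => [ab|ab|/val_inj ->]; rewrite ?eqxx //=;
  (have /negbTE -> : a != b by rewrite neq_ltn ab ?orbT); by rewrite ?addbF.
rewrite [X in _ (+) X](_ : _ = xs (fun a => f a a)); last first.
  apply: eq_bigr => a _; rewrite (bigD1 a) //= eqxx big1 ?addbF // => b ba.
  by rewrite eq_sym (negbTE ba).
congr (_ (+) _); rewrite [X in _ (+) X]exchange_big /= -big_split /=.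
by apply: eq_bigr => a _; rewrite -big_split /=; apply: eq_bigr => b _; rewrite andb_addr.
Qed.

Lemma sumT (F : 'I_n -> nat) : (\sum_(b in setT) F b = \sum_b F b)%N.
Proof. by apply: eq_bigl => b; rewrite inE. Qed.

Lemma oddE C : odd (E C setT) =
  xs (fun a : 'I_n => (a \in C) && (xs (fun b : 'I_n => (b < a)%N) (+) true)).
Proof.
rewrite /E sumT odd_sum.
under eq_bigr => b _ do rewrite oddD /cg card_sum odd_sum oddb.
rewrite big_split /= exchange_big /= -big_split /=; apply: eq_bigr => a _.
rewrite andb_addr andb_xs andbT; congr (_ (+) _); apply: eq_bigr => b _.
by rewrite oddb.
Qed.

Lemma E_sd A D : odd (E (sd A D) setT) = odd (E A setT) (+) odd (E D setT).
Proof.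
rewrite !oddE -big_split /=; apply: eq_bigr => a _.
by rewrite -andb_addl !inE; case: (a \in A); case: (a \in D).
Qed.

Lemma E_split A X : (E A X + E A (~: X) = E A setT)%N.
Proof.
by rewrite /E [in RHS](big_setID X) /= setTI setTD.
Qed.

Lemma oddI w S : odd (I w S) =
  xs (fun a : 'I_n => xs (fun b : 'I_n => [&& a \in S, b \in S, (a < b)%N & inv w a b])).
Proof.
rewrite /I big_mkcond odd_sum; apply: eq_bigr => a _.
case: (a \in S); last by rewrite big1.
rewrite big_mkcond odd_sum; apply: eq_bigr => b _.
case: (b \in S) => //=; rewrite oddb /inv; case: ltngtP => //= ab.
have : w a != w b by rewrite (inj_eq perm_inj) neq_ltn ab.
by rewrite neq_ltn; case: ltngtP.
Qed.


Lemma G4 w B : odd (It w) =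
  odd (I w B) (+) odd (I w (~: B)) (+) odd (E B setT) (+) odd (E (w @: B) setT).
Proof.
have e4 : xs (fun a : 'I_n => (a \in w @: B) && (xs (fun b : 'I_n => (b < a)%N) (+) true))
  = xs (fun a : 'I_n => (a \in B) && (xs (fun b : 'I_n => (w b < w a)%N) (+) true)).
  rewrite (reindex_inj (@perm_inj _ w)) /=; apply: eq_bigr => a _.
  by rewrite mem_imset_perm permK (reindex_inj (@perm_inj _ w)).
have h34 : odd (E B setT) (+) odd (E (w @: B) setT) =
    xs (fun a : 'I_n => xs (fun b : 'I_n => (b \in B) && inv w a b)).
  rewrite !oddE e4 -big_split /= exchange_big /=; apply: eq_bigr => a _.
  rewrite -andb_addr -andb_xs; congr (_ && _).
  have tt : forall x y : bool, x (+) true (+) (y (+) true) = x (+) y by do 2!case.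
  by rewrite tt -big_split.
rewrite -addbA h34 Xsplit [X in _ (+) (_ (+) X)]big1; last by move=> a _; rewrite inv_diag andbF.
rewrite addbF oddIt !oddI -!big_split /=; apply: eq_bigr => a _.
rewrite -!big_split /=; apply: eq_bigr => b _.
rewrite (inv_sym w b a) !inE.
by case: (a \in B); case: (b \in B); case: (a < b)%N; case: (inv w a b).
Qed.


Lemma semul0l y : semul 0 y = 0.
Proof.
rewrite semulE big1 // => p _; rewrite big1 // => q _.
by rewrite coef0 mul0r scale0r.
Qed.

Lemma semul_suml (J : finType) (F : J -> Se k n) y :
  semul (\sum_j F j) y = \sum_j semul (F j) y.
Proof.
elim/big_rec2: _ => [|r y1 y2 _ <-]; first by rewrite semul0l.
by rewrite semulDl.
Qed.

Lemma assoc_dl q0 :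
  (forall p q, semul (bp p q) (dl q0) = semul (dl p) (bp q q0)) ->
  forall x y, semul (semul x y) (dl q0) = semul x (semul y (dl q0)).
Proof.
move=> H x y.
rewrite [semul y _]semul_dlr semul_sumr [semul x y]semulE semul_suml.
under eq_bigr => p _ do rewrite semul_suml.
under [in RHS]eq_bigr => q _ do rewrite semulZr {1}(dl_decomp x) semul_suml.
under [in RHS]eq_bigr => q _ do rewrite scaler_sumr.
rewrite [in RHS]exchange_big /=; apply: eq_bigr => p _; apply: eq_bigr => q _.
by rewrite semulZl H semulZl scalerA mulrC.
Qed.

Lemma assoc_gen z :
  (forall q0, z q0 != 0 -> forall p q, semul (bp p q) (dl q0) = semul (dl p) (bp q q0)) ->
  forall x y, semul (semul x y) z = semul x (semul y z).
Proof.
move=> H x y; rewrite (dl_decomp z) [LHS]semul_sumr [semul y _]semul_sumr.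
rewrite [RHS]semul_sumr; apply: eq_bigr => q0 _.
have [->|nz] := eqVneq (z q0) 0; first by rewrite !scale0r !semul0r.
by rewrite !semulZr assoc_dl //; apply: H.
Qed.


Lemma imsetT_perm (w : 'S_n) : w @: setT = setT.
Proof. by apply/setP => x; rewrite mem_imset_perm !inE. Qed.

Lemma imsetC_perm (w : 'S_n) B : w @: (~: B) = ~: (w @: B).
Proof. by apply/setP => x; rewrite mem_imset_perm !inE mem_imset_perm. Qed.

Lemma sd0 A : sd A set0 = A.
Proof. by apply/setP => x; rewrite !inE; case: (x \in A). Qed.

Lemma sdT A : sd A setT = ~: A.
Proof. by apply/setP => x; rewrite !inE; case: (x \in A). Qed.

Lemma sdC A X : sd A (~: X) = ~: sd A X.
Proof. by apply/setP => x; rewrite !inE; case: (x \in A); case: (x \in X). Qed.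

Lemma I0 w : I w set0 = 0%N.
Proof. by rewrite /I big_set0. Qed.

Lemma E0 A : E A set0 = 0%N.
Proof. by rewrite /E big_set0. Qed.

Lemma sg_odd a b : odd a = odd b -> sg a = sg b.
Proof. by move=> h; rewrite /sg -signr_odd h signr_odd. Qed.

Lemma bp_r0 p u : bp p (set0, u) = dl (p.1, scomp p.2 u).
Proof. by case: p => A w; rewrite bpE imset0 I0 E0 sd0 /sg expr0 scale1r. Qed.

Lemma triple0 u p q :
  semul (bp p q) (dl (set0, u)) = semul (dl p) (bp q (set0, u)).
Proof.
case: p q => [A w] [B v]; rewrite bp_r0 bpE semulZl !semul_dl bp_r0 bpE /=.
by rewrite /scomp mulgA.
Qed.

Lemma tripleT p q :
  semul (bp p q) (dl (setT, 1%g)) = semul (dl p) (bp q (setT, 1%g)).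
Proof.
case: p q => [A w] [B v].
rewrite bpE semulZl semul_dl bpE bpE semulZr semul_dl bpE !scalerA.
rewrite !imsetT_perm !sdT /scomp !mul1g imsetC_perm sdC.
congr (_ *: _); rewrite -!sgD; apply: sg_odd.
have h1 := E_sd A (w @: B).
have h2 := E_split A (w @: B).
have h3 := G4 w B.
rewrite !oddD !I_T !It_odd odd_permM h1.
move/(congr1 odd): h2; rewrite oddD => <-; rewrite It_odd in h3; rewrite h3.
case: (odd (I w B)); case: (odd (E A (w @: B))); case: (odd_perm v);
  case: (odd (E (w @: B) setT)); case: (odd (E B setT)); case: (odd (I w (~: B)));
  by case: (odd (E A (~: (w @: B)))).
Qed.


Definition g : Se k n := dl (setT, 1%g).

Lemma sebasis_mono1 D u : sebasis (clmono k D) u = dl (D, u).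
Proof. by rewrite -[clmono k D]scale1r sebasis_mono scale1r. Qed.

Lemma e_trivE : e_triv k n = (n`!%:R)^-1 *: \sum_(u : 'S_n) dl (set0, u).
Proof. by rewrite /e_triv; congr (_ *: _); apply: eq_bigr => u _; rewrite sebasis_mono1. Qed.

Lemma e_sgnE : e_sgn k n = (n`!%:R)^-1 *: \sum_(u : 'S_n) sg (odd_perm u) *: dl (set0, u).
Proof. by rewrite /e_sgn; congr (_ *: _); apply: eq_bigr => u _; rewrite sebasis_mono1. Qed.

Lemma supp0 c (F : 'S_n -> k) q0 :
  (c *: \sum_(u : 'S_n) F u *: dl (set0, u)) q0 != 0 -> q0.1 = set0.
Proof.
case: q0 => D u0 /=; apply: contraNeq => D0.
rewrite coefZ sum_ffunE big1 ?mulr0 // => u _.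
by rewrite coefZ ffunE xpair_eqE (negbTE D0) mulr0.
Qed.

Lemma good0 z : (forall q0, z q0 != 0 -> q0.1 = set0) ->
  forall x y, semul (semul x y) z = semul x (semul y z).
Proof.
move=> H; apply: assoc_gen => -[D u] /H /= ->; exact: triple0.
Qed.

Lemma assoc_triv x y : semul (semul x y) (e_triv k n) = semul x (semul y (e_triv k n)).
Proof.
apply: good0 => q0; rewrite e_trivE => h.
rewrite (eq_bigr (fun u : 'S_n => 1 *: dl (set0, u))) in h; first exact: supp0 h.
by move=> u _; rewrite scale1r.
Qed.

Lemma assoc_sgn x y : semul (semul x y) (e_sgn k n) = semul x (semul y (e_sgn k n)).
Proof. by apply: good0 => q0; rewrite e_sgnE; apply: supp0. Qed.

Lemma assoc_g x y : semul (semul x y) g = semul x (semul y g).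
Proof.
apply: assoc_gen => q0; rewrite /g ffunE.
case: (eqVneq q0 (setT, 1%g)) => [-> _|ne]; first exact: tripleT.
by rewrite eqxx.
Qed.

Lemma E0l C : E set0 C = 0%N.
Proof.
rewrite /E big1 // => b _; rewrite inE addn0 /cg.
by apply/eqP; rewrite cards_eq0; apply/eqP/setP => a; rewrite !inE.
Qed.

Lemma dl0g u : semul (dl (set0, u)) g = sg (odd_perm u) *: dl (setT, u).
Proof.
rewrite semul_dl bpE imsetT_perm E0l addn0 I_T.
have -> : sd set0 setT = setT by apply/setP => x; rewrite !inE.
by rewrite /scomp mul1g; congr (_ *: _); apply: sg_odd; rewrite It_odd oddb.
Qed.

Lemma gdl0 u : semul g (dl (set0, u)) = dl (setT, u).
Proof. by rewrite semul_dl bp_r0 /= /scomp mulg1. Qed.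

Lemma K1 : semul (e_triv k n) g = semul g (e_sgn k n).
Proof.
rewrite e_trivE e_sgnE semulZl semulZr semul_suml semul_sumr; congr (_ *: _).
apply: eq_bigr => u _; by rewrite dl0g semulZr gdl0.
Qed.

Lemma sgsg b : sg b * sg b = 1.
Proof. by rewrite -sgD addnn /sg -signr_odd odd_double expr0. Qed.

Lemma K2 : semul (e_sgn k n) g = semul g (e_triv k n).
Proof.
rewrite e_trivE e_sgnE semulZl semulZr semul_suml semul_sumr; congr (_ *: _).
apply: eq_bigr => u _; by rewrite semulZl dl0g scalerA sgsg scale1r gdl0.
Qed.

Definition c0 := sg (I 1 setT + E setT setT).

Lemma c0c0 : c0 * c0 = 1.
Proof. exact: sgsg. Qed.

Lemma ff x : semul (semul x g) g = c0 *: x.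
Proof.
rewrite assoc_g semul_dl bpE imsetT_perm.
have -> : sd setT setT = set0 by apply/setP => y; rewrite !inE.
rewrite semulZr semul_dlr [in RHS](dl_decomp x) !scaler_sumr; apply: eq_bigr => p _.
by rewrite bp_r0 /scomp !mulg1 !mul1g; case: p.
Qed.

Lemma coef_g x r : (semul x g) r != 0 -> x (~: r.1, r.2) != 0.
Proof.
apply: contraNneq => h; rewrite semul_dlr sum_ffunE big1 // => -[B v] _.
rewrite bpE imsetT_perm sdT /scomp mul1g !coefZ ffunE.
case: eqP => [e|]; last by rewrite !mulr0.
by move: h; rewrite e /= setCK => ->; rewrite mul0r.
Qed.

End Work.

Unset Implicit Arguments.
Set Strict Implicit.
Set Printing Implicit Defensive.

Theorem lemma2 (k : fieldType) (n : nat) :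
  [pchar k] =i pred0 -> (0 < n)%N ->
  exists f : Se k n -> Se k n,
    (forall x, left_ideal (e_triv k n) x -> left_ideal (e_sgn k n) (f x)) /\
    (forall x y, left_ideal (e_triv k n) x -> left_ideal (e_triv k n) y ->
       f (x + y) = f x + f y) /\
    (forall (c : k) x, left_ideal (e_triv k n) x -> f (c *: x) = c *: f x) /\
    (forall a x, left_ideal (e_triv k n) x -> f (semul a x) = semul a (f x)) /\
    (forall x y, left_ideal (e_triv k n) x -> left_ideal (e_triv k n) y ->
       f x = f y -> x = y) /\
    (forall z, left_ideal (e_sgn k n) z ->
       exists x, left_ideal (e_triv k n) x /\ f x = z) /\
    (forall (p : bool) x, left_ideal (e_triv k n) x -> homog p x ->
       homog (p (+) odd n) (f x)).
Proof.
move=> _ _; exists (fun x => semul x (g k n)).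
split; first by move=> x [y ->]; exists (semul y (g k n)); rewrite assoc_g K1 assoc_sgn.
split; first by move=> x y _ _; rewrite semulDl.
split; first by move=> c x _; rewrite semulZl.
split; first by move=> a x _; rewrite assoc_g.
split.
  move=> x y _ _ h.
  have : c0 k n *: semul (semul x (g k n)) (g k n) = c0 k n *: semul (semul y (g k n)) (g k n).
    by rewrite h.
  by rewrite !ff !scalerA c0c0 !scale1r.
split.
  move=> z [y ->]; exists (c0 k n *: semul (semul y (g k n)) (e_triv k n)); split.
    by exists (c0 k n *: semul y (g k n)); rewrite semulZl.
  by rewrite semulZl assoc_triv -K2 -assoc_g ff scalerA c0c0 scale1r.
move=> p x _ hx r /coef_g /hx /= hr.
have := cardsC r.1; rewrite card_ord => /(congr1 odd); rewrite oddD hr => <-.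
by rewrite addbC -addbA addbb addbF.
Qed.
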